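(* Let $p$ be a prime, $0<\alpha\le 1$, and let $S\subseteq\mathbb{Z}_p$ be such that for any distinct $x_1,x_2,y_1,y_2,z_1,z_2\in S$, $$\det\begin{pmatrix}x_1-y_1 & x_2-y_2\\ y_1-z_1 & y_2-z_2\end{pmatrix}\neq 0 \quad\text{in } \mathbb{Z}_p.$$ Then $$\mathcal{C}^{\mathrm{bsgs}}_\alpha(S)>(\alpha|S|/\sqrt3)^{2/3}.$$
   Context: For $L\subseteq\mathbb{Z}_p^2$ and $C\subseteq\mathbb{Z}_p$, $I(L,C)=\{x\in\mathbb{Z}_p\mid \exists (a,b)\in L,\ c\in C \text{ with } a\neq0 \text{ and } ax+b=c\}$. The baby-step giant-step $\alpha$-complexity $\mathcal{C}^{\mathrm{bsgs}}_\alpha(S)$ of $S\subseteq\mathbb{Z}_p$ is the smallest integer $m$ such that there exist $L\subseteq\mathbb{Z}_p^2$ and $C\subseteq\mathbb{Z}_p$ with $|L|=|C|=m$ and $|I(L,C)\cap S|\geq\alpha|S|$. *)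

(* Defs.v *)
From HB Require Import structures.
From mathcomp Require Import all_boot all_order all_algebra.
From mathcomp Require Import all_classical all_reals all_analysis.
Set Implicit Arguments. Unset Strict Implicit. Unset Printing Implicit Defensive.
Import Order.TTheory GRing.Theory Num.Theory.
Local Open Scope ring_scope.

(* Z_p for a prime p is 'F_p. *)

Definition Iset (p : nat) (L : {set 'F_p * 'F_p}) (C : {set 'F_p}) : {set 'F_p} :=
  [set x | [exists ab in L, exists c in C, (ab.1 != 0) && (ab.1 * x + ab.2 == c)]].

Definition bsgs_ok (R : realType) (p : nat) (alpha : R) (S : {set 'F_p}) (m : nat) : bool :=
  [exists L : {set 'F_p * 'F_p}, exists C : {set 'F_p},
    [&& #|L| == m, #|C| == m & alpha * #|S|%:R <= #|Iset L C :&: S|%:R]].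

(* Since |L| <= p^2, any admissible m is <= p^2, so
   searching 0..p^2 finds the minimum whenever one exists (for 0 < α <= 1 one
   always exists, e.g. m = p). If none exists the value is p^2+1 (irrelevant). *)
Definition bsgs_complexity (R : realType) (p : nat) (alpha : R) (S : {set 'F_p}) : nat :=
  find (bsgs_ok alpha S) (iota 0 (p ^ 2).+1).

(* Main.v *)
Require Import Defs.
From HB Require Import structures.
From mathcomp Require Import all_boot all_order all_algebra.
From mathcomp Require Import all_classical all_reals all_analysis.
From mathcomp Require Import ring lra zify.
Import Order.TTheory GRing.Theory Num.Theory.
Local Open Scope ring_scope.

Lemma det2 (R : comNzRingType) (A : 'M[R]_2) : \det A = A 0 0 * A 1 1 - A 0 1 * A 1 0.
Proof.
rewrite (expand_det_row _ 0) !big_ord_recl big_ord0 /cofactor !det_mx11 !mxE /=.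
have -> : lift (0:'I_2) (0:'I_1) = 1 by apply/val_inj.
have -> : lift (1:'I_2) (0:'I_1) = 0 by apply/val_inj.
have -> : (ord0 : 'I_2) = 0 by apply/val_inj.
rewrite /bump /= expr0 expr1; ring.
Qed.

Lemma det_zero p (a b a' b' c1 c2 c3 : 'F_p) : a != 0 -> a' != 0 ->
  let x1 := (c1 - b) / a in let y1 := (c2 - b) / a in let z1 := (c3 - b) / a in
  let x2 := (c1 - b') / a' in let y2 := (c2 - b') / a' in let z2 := (c3 - b') / a' in
  \det (\matrix_(i < 2, j < 2)
              nth 0 (nth [::] [:: [:: x1 - y1; x2 - y2]; [:: y1 - z1; y2 - z2]] i) j) = 0.
Proof.
move=> ha ha' /=; rewrite det2 !mxE /=. field. by rewrite ha ha'.
Qed.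

Lemma cs_nat (T : finType) (C : {pred T}) (d : T -> nat) :
  ((\sum_(c in C) d c) ^ 2 <= #|C| * \sum_(c in C) d c ^ 2)%N.
Proof.
rewrite -(leq_pmul2l (isT : (0 < 2)%N)).
have -> : ((\sum_(c in C) d c) ^ 2 = \sum_(i in C) \sum_(j in C) d i * d j)%N.
  by rewrite expnS expn1 big_distrl /=; apply eq_bigr => i _; rewrite big_distrr.
rewrite big_distrr /=.
apply: (@leq_trans (\sum_(i in C) \sum_(j in C) (d i ^ 2 + d j ^ 2))%N).
  apply leq_sum => i _; rewrite big_distrr /=; apply leq_sum => j _; by case: (nat_Cauchy (d i) (d j)).
rewrite (eq_bigr (fun i => #|C| * d i ^ 2 + \sum_(j in C) d j ^ 2)%N); last first.
  by move=> i _; rewrite big_split /= sum_nat_const.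
rewrite big_split /= sum_nat_const -big_distrr /=.
lia.
Qed.

Lemma core p (S : {set 'F_p}) (L : {set 'F_p * 'F_p}) (C : {set 'F_p}) m :
  (forall x1 x2 y1 y2 z1 z2 : 'F_p,
      x1 \in S -> x2 \in S -> y1 \in S -> y2 \in S -> z1 \in S -> z2 \in S ->
      uniq [:: x1; x2; y1; y2; z1; z2] ->
      \det (\matrix_(i < 2, j < 2)
              nth 0 (nth [::] [:: [:: x1 - y1; x2 - y2]; [:: y1 - z1; y2 - z2]] i) j) != 0) ->
  #|L| = m -> #|C| = m -> (0 < #|Iset L C :&: S|)%N ->
  (#|Iset L C :&: S| ^ 2 < 3 * m ^ 3)%N.
Proof.
move=> hdet hL hC hT.
pose xv (u : ('F_p * 'F_p) * 'F_p) := (u.2 - u.1.2) / u.1.1.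
pose E0 := [set u : ('F_p * 'F_p) * 'F_p | [&& u.1 \in L, u.2 \in C, u.1.1 != 0 & xv u \in S]].
pose E := [set u in E0 | [pick z in E0 | xv z == xv u] == Some u].
have injE : {in E &, injective xv}.
  move=> u v; rewrite !inE => /andP[_ /eqP hu] /andP[_ /eqP hv] huv.
  by move: hu; rewrite huv hv => -[].
have TE : Iset L C :&: S \subset xv @: E.
  apply/fintype.subsetP => x; rewrite !inE => /andP[/existsP[ab /andP[abL /existsP[c /andP[cC /andP[ha /eqP hc]]]]] xS].
  have hx : xv (ab, c) = x by rewrite /xv /= -hc; field.
  have u0E : (ab, c) \in E0 by rewrite inE /= abL cC ha hx xS.
  case hp: [pick z in E0 | xv z == x] => [z|]; last first.
    by move: hp; case: pickP => //= hn _; have := hn (ab, c); rewrite /= u0E hx eqxx.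
  move: (hp); case: pickP => [z' /andP[zE0 /eqP hz] [ez]|//]; subst z'.
  apply/finset.imsetP; exists z => //.
  by rewrite inE zE0 /= hz hp eqxx.
have hTE : (#|Iset L C :&: S| <= #|E|)%N.
  exact: leq_trans (subset_leq_card TE) (leq_imset_card _ _).
have hE : forall u, u \in E -> [&& u.1 \in L, u.2 \in C, u.1.1 != 0 & xv u \in S].
  by move=> u; rewrite !inE => /andP[].
clearbody E.
pose a l c := ((l, c) \in E).
pose deg c := (\sum_(l in L) (a l c : nat))%N.
have sub : forall l c, (l, c) \in E -> (l \in L) && (c \in C).
  by move=> l c /hE /and4P[-> -> _ _].
have claim1 : #|E| = (\sum_(c in C) deg c)%N.
  rewrite /deg exchange_big /= -sum1_card pair_big_dep /=.
  rewrite big_mkcond [RHS]big_mkcond /=; apply: eq_bigr => -[l c] _ /=.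
  rewrite /a; case hEl: ((l, c) \in E); first by rewrite (sub _ _ hEl).
  by case: (_ && _).
have claim2 : forall l l', l \in L -> l' \in L -> l != l' ->
    (\sum_(c in C) (a l c && a l' c : nat) <= 2)%N.
  move=> l l' lL l'L nll'; rewrite leqNgt; apply/negP => h.
  have eqc : (\sum_(c in C) (a l c && a l' c : nat))%N = #|[set c in C | a l c && a l' c]|.
    rewrite -sum1_card [RHS]big_mkcond [LHS]big_mkcond; apply eq_bigr => c _.
    by rewrite inE; case: (c \in C); case: (a l c); case: (a l' c).
  move: h; rewrite eqc => /card_gt2P [x [y [z [[hx hy hz] [nxy nyz nzx]]]]].
  move: hx hy hz; rewrite !inE /a => /and3P[_ lx l'x] /and3P[_ ly l'y] /and3P[_ lz l'z].
  have mS : forall u, u \in E -> xv u \in S by move=> u /hE /and4P[].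
  have n0 : forall u, u \in E -> u.1.1 != 0 by move=> u /hE /and4P[].
  have U : uniq [:: xv (l,x); xv (l',x); xv (l,y); xv (l',y); xv (l,z); xv (l',z)].
    change (uniq (map xv [:: (l,x); (l',x); (l,y); (l',y); (l,z); (l',z)])).
    have hall : all (mem E) [:: (l,x); (l',x); (l,y); (l',y); (l,z); (l',z)].
      by rewrite /= lx l'x ly l'y lz l'z.
    rewrite (map_inj_in_uniq (sub_in2 (allP hall) injE)).
    have e1 : (l == l') = false by apply/negbTE.
    have e2 : (l' == l) = false by rewrite eq_sym; apply/negbTE.
    have e3 : (x == y) = false by apply/negbTE.
    have e4 : (y == x) = false by rewrite eq_sym; apply/negbTE.
    have e5 : (y == z) = false by apply/negbTE.
    have e6 : (z == y) = false by rewrite eq_sym; apply/negbTE.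
    have e7 : (z == x) = false by apply/negbTE.
    have e8 : (x == z) = false by rewrite eq_sym; apply/negbTE.
    by rewrite /= !inE !xpair_eqE ?e1 ?e2 ?e3 ?e4 ?e5 ?e6 ?e7 ?e8 ?eqxx ?andbF ?andFb.
  have := hdet _ _ _ _ _ _ (mS _ lx) (mS _ l'x) (mS _ ly) (mS _ l'y) (mS _ lz) (mS _ l'z) U.
  move/eqP; apply.
  exact: (@det_zero p l.1 l.2 l'.1 l'.2 x y z (n0 _ lx) (n0 _ l'x)).
have claim3 : (\sum_(c in C) deg c ^ 2 <= #|E| + m * (2 * m - 2))%N.
  have -> : (\sum_(c in C) deg c ^ 2 =
      \sum_(l in L) \sum_(l' in L) \sum_(c in C) (a l c * a l' c : nat))%N.
    rewrite (eq_bigr (fun c => \sum_(l in L) \sum_(l' in L) (a l c * a l' c : nat))%N); last first.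
      move=> c _; rewrite /deg expnS expn1 big_distrl /=; apply eq_bigr => l _.
      by rewrite big_distrr.
    rewrite exchange_big /=; apply eq_bigr => l _; by rewrite exchange_big.
  have -> : (m * (2 * m - 2) = \sum_(l in L) (2 * m - 2))%N by rewrite sum_nat_const hL.
  rewrite claim1 /deg [X in (_ <= X + _)%N]exchange_big /= -big_split /=.
  apply leq_sum => l lL.
  rewrite (bigD1 l) //= leq_add //.
    by apply leq_sum => c _; rewrite mulnb andbb.
  have h2 : (\sum_(i in L) 2 = 2 + \sum_(i in L | i != l) 2)%N by rewrite (bigD1 l).
  rewrite sum_nat_const in h2.
  apply: (@leq_trans (\sum_(i in L | i != l) 2)%N); last by rewrite -hL; lia.
  apply leq_sum => l' /andP[l'L nl]; rewrite (eq_bigr (fun c => (a l c && a l' c : nat))).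
    by apply claim2 => //; rewrite eq_sym.
  by move=> c _; rewrite mulnb.
have claim5 : (\sum_(c in C) deg c <= m * m)%N.
  rewrite -{1}hC -sum_nat_const; apply leq_sum => c _.
  rewrite -hL -sum1_card; apply leq_sum => l _; exact: leq_b1.
have cs := @cs_nat _ (mem C) deg.
rewrite hC -claim1 in cs; rewrite -claim1 in claim5.
have m1 : (0 < m)%N.
  rewrite lt0n; apply/eqP => m0; move: claim5; rewrite m0 muln0 leqn0 => /eqP e0; lia.
move: hTE cs claim3 claim5 m1 hT.
set t := #|_ :&: _|; set e := #|E|; set D := (\sum_(c in C) _)%N.
move=> h1 h2 h3 h4 h5 h6.
have : (e ^ 2 <= m * e + m * m * (2 * m - 2))%N.
  apply: leq_trans h2 _; by rewrite -mulnA -mulnDr leq_mul2l h3 orbT.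
have : (t ^ 2 <= e ^ 2)%N by rewrite leq_exp2r.
have : (m * e <= m * (m * m))%N by rewrite leq_mul2l h4 orbT.
nia.
Qed.

Lemma real_step (R : realType) (alpha : R) (s N n : nat) :
  0 < alpha * s%:R -> alpha * s%:R <= N%:R -> (N ^ 2 < 3 * n ^ 3)%N ->
  (alpha * s%:R / Num.sqrt 3) `^ (2 / 3) < n%:R.
Proof.
move=> h0 h1 h2.
have s3 : 0 < Num.sqrt (3 : R) by rewrite sqrtr_gt0.
set y := alpha * s%:R / Num.sqrt 3.
have y0 : 0 <= y by rewrite /y divr_ge0 // ltW.
have hN : (N%:R : R) ^+ 2 < 3 * n%:R ^+ 3.
  by rewrite -!natrX -natrM ltr_nat.
have hy2 : y ^+ 2 < n%:R ^+ 3.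
  rewrite /y expr_div_n sqr_sqrtr // ltr_pdivrMr //.
  apply: le_lt_trans _ (_ : N%:R ^+ 2 < _); last by rewrite mulrC.
  rewrite ler_pXn2r // ?nnegrE ?ltW //.
exact: lt_le_trans h0 h1.
rewrite ltNge; apply/negP => hle.
have : n%:R ^+ 3 <= (y `^ (2 / 3)) ^+ 3 by rewrite ler_pXn2r // ?nnegrE ?powR_ge0.
rewrite -powR_mulrn ?powR_ge0 // -powRrM.
have -> : 2 / 3 * 3%:R = 2%:R :> R by field.
rewrite powR_mulrn // => h; move: (lt_le_trans hy2 h); by rewrite ltxx.
Qed.

Theorem theorem8 (R : realType) (p : nat) (alpha : R) (S : {set 'F_p}) :
  prime p -> 0 < alpha -> alpha <= 1 -> (0 < #|S|)%N ->
  (forall x1 x2 y1 y2 z1 z2 : 'F_p,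
      x1 \in S -> x2 \in S -> y1 \in S -> y2 \in S -> z1 \in S -> z2 \in S ->
      uniq [:: x1; x2; y1; y2; z1; z2] ->
      \det (\matrix_(i < 2, j < 2)
              nth 0 (nth [::] [:: [:: x1 - y1; x2 - y2]; [:: y1 - z1; y2 - z2]] i) j) != 0) ->
  (alpha * #|S|%:R / Num.sqrt 3) `^ (2 / 3) < (bsgs_complexity alpha S)%:R.
Proof.
move=> pp a0 a1 S0 hdet.
have aS : 0 < alpha * #|S|%:R by rewrite mulr_gt0 // ltr0n.
rewrite /bsgs_complexity.
set P := bsgs_ok alpha S; set s := iota 0 (p ^ 2).+1.
case: (boolP (has P s)) => hP.
  have hk : (find P s < size s)%N by rewrite -has_find.
  have := nth_find 0%N hP.
  rewrite {2}/s nth_iota ?add0n; last by rewrite size_iota in hk.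
  move=> /existsP[L /existsP[C /and3P[/eqP hL /eqP hC hle]]].

  apply: (@real_step _ _ _ _ _ aS hle); apply: core hdet hL hC _.
  rewrite -(ltr0n R); exact: lt_le_trans aS hle.
rewrite hasNfind // /s size_iota.
apply: (@real_step _ _ _ #|S| _ aS); first by rewrite ler_piMl // ler0n.
have : (#|S| <= p)%N by rewrite -[X in (_ <= X)%N](card_Fp pp) max_card.
nia.
Qed.
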